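(* In each of the following cases there exists an ascending partition $\mathcal P=[p_1,\dots,p_k]\in AP_{n,k}$ with $p_1=\cdots=p_e=2$ and $p_{e+1}=\cdots=p_{e+f}=3$ (i.e. completing the partial partition $[2^e,3^f]$) such that $\mathcal P$ is non-equitable and $\mathrm{slack}(\mathcal P)\ge 0$: (a) $n=6t+3$, $k=2t+1$, $e=\frac32 t$, $f=2$, for every even $t\ge 6$; (b) $n=6t+3$, $k=2t+1$, $e=\frac32 t-\frac12$, $f=3$, for every odd $t\ge 7$; (c) $n=6t+2$, $k=2t+1$, $e=\frac32 t$, $f=3$, for every even $t\ge 10$; (d) $n=6t+2$, $k=2t+1$, $e=\frac32 t+\frac12$, $f=2$, for every odd $t\ge 11$.
   Context: $[n]=\{1,\ldots,n\}$ and $s^{n,k}=\frac{n(n+1)}{2k}$. An ascending partition of $n$ of size $k$ is a sequence of positive integers $[p_1,\ldots,p_k]$ with $p_1\le\cdots\le p_k$ and $\sum_i p_i=n$; $AP_{n,k}$ is the set of all such partitions when $s^{n,k}$ is an integer (and empty otherwise). $\mathcal P$ is equitable if $[n]$ can be partitioned into sets $A_1,\dots,A_k$ with $|A_i|=p_i$ all having the same element sum. For $j=1,\ldots,k$, $\mathrm{slack}_j(\mathcal P)=\sum_{i=1}^{p_1+\cdots+p_j}(n-i+1)-j\,s^{n,k}$, and $\mathrm{slack}(\mathcal P)=\min_{1\le j\le k-1}\mathrm{slack}_j(\mathcal P)$. *)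

(* Defs.v *)
From mathcomp Require Import all_boot all_order all_algebra.
Set Implicit Arguments. Unset Strict Implicit. Unset Printing Implicit Defensive.
Import Order.TTheory GRing.Theory Num.Theory.

(* An ascending partition of n of size k: a sequence of k positive integers,
   nondecreasing, summing to n.  p_i (1-based) is [nth 0 P (i-1)]. *)
Definition asc_partition (n k : nat) (P : seq nat) : bool :=
  [&& size P == k, all (fun p => 0 < p) P, sorted leq P & sumn P == n].

(* AP_{n,k}: ascending partitions of n of size k, empty unless
   s^{n,k} = n(n+1)/(2k) is an integer. *)
Definition in_AP (n k : nat) (P : seq nat) : bool :=
  ((2 * k) %| n * n.+1) && asc_partition n k P.

(* s^{n,k} (used when it is an integer) *)
Definition snk (n k : nat) : nat := (n * n.+1) %/ (2 * k).

(* Equitable: [n] = {1..n} can be partitioned into A_1..A_k with |A_i| = p_i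
   and all A_i having the same element sum.  The partition is encoded by the
   map f sending element x.+1 (x : 'I_n) to the index (0-based) of its block. *)
Definition equitable (n k : nat) (P : seq nat) : Prop :=
  exists f : 'I_n -> 'I_k,
    (forall i : 'I_k, #|[set x | f x == i]| = nth 0 P i) /\
    (forall i j : 'I_k,
        \sum_(x | f x == i) (x : nat).+1 = \sum_(x | f x == j) (x : nat).+1).

Definition slack_j (n k : nat) (P : seq nat) (j : nat) : int :=
  (\sum_(1 <= i < (sumn (take j P)).+1) (n.+1 - i))%:Z - (j * snk n k)%:Z.

Definition slack (n k : nat) (P : seq nat) : int :=
  \big[Order.min/slack_j n k P 1]_(1 <= j < k) slack_j n k P j.

Definition completes (e f : nat) (P : seq nat) : Prop :=
  (forall i, i < e -> nth 0 P i = 2) /\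
  (forall i, e <= i < e + f -> nth 0 P i = 3).

Definition good_completion (n k e f : nat) : Prop :=
  exists P : seq nat,
    in_AP n k P /\ completes e f P /\ ~ equitable n k P /\ (0 <= slack n k P)%R.

(* Main.v *)
Require Import Defs.
From mathcomp Require Import all_boot all_order all_algebra zify ring.
Import Order.TTheory GRing.Theory Num.Theory.

Lemma sum_top (n m : nat) : m <= n ->
  2 * (\sum_(1 <= i < m.+1) (n.+1 - i)) = m * (2 * n + 1 - m).
Proof.
elim: m => [|m IH] Hm; first by rewrite big_geq.
rewrite big_nat_recr //= mulnDr IH; last by lia.
have [d ->] : exists d, n = m.+1 + d by exists (n - m.+1); lia.
have -> : 2 * (m.+1 + d) + 1 - m = m + 2 * d + 3 by lia.
have -> : (m.+1 + d).+1 - m.+1 = d + 1 by lia.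
have -> : 2 * (m.+1 + d) + 1 - m.+1 = m + 2 * d + 2 by lia.
ring.
Qed.

Lemma sum_ind (lo n : nat) :
  \sum_(x < n) (if lo <= x.+1 then 1 else 0) = n - lo.-1.
Proof.
elim: n => [|n IH]; first by rewrite big_ord0.
rewrite big_ord_recr /= IH; case: ifP => H; lia.
Qed.

Lemma sum_2_1 (e m : nat) :
  \sum_(j < m) (if j < e then 2 else 1) = m + minn m e.
Proof.
elim: m => [|m IH]; first by rewrite big_ord0; lia.
rewrite big_ord_recr /= IH; case: ifP => H; lia.
Qed.

Lemma sum_vals (n : nat) : 2 * \sum_(x < n) (x : nat).+1 = n * n.+1.
Proof.
elim: n => [|n IH]; first by rewrite big_ord0.
rewrite big_ord_recr /= mulnDr IH (mulnC n) (mulnC 2) -mulnDr addn2 //.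
Qed.

Lemma sumn_take_nseq (j a x : nat) (s : seq nat) :
  sumn (take j (nseq a x ++ s)) =
  if j <= a then x * j else x * a + sumn (take (j - a) s).
Proof.
rewrite take_cat size_nseq; case: ltnP => H.
  by rewrite (@take_nseq _ j a x (ltnW H)) sumn_nseq (ltnW H).
rewrite sumn_cat sumn_nseq; case: (leqP j a) => H2.
  have -> : j = a by lia.
  by rewrite subnn take0 /= addn0.
by [].
Qed.

Lemma sorted_nseq (a x : nat) (s : seq nat) :
  sorted leq s -> all (leq x) s -> sorted leq (nseq a x ++ s).
Proof.
move=> Hs Ha; elim: a => [|a IH] //=.
rewrite path_sortedE; last exact: leq_trans.
by rewrite IH all_cat all_nseq leqnn orbT Ha.
Qed.

Lemma noneq (n k e f s : nat) (P : seq nat) :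
  0 < k -> e + f <= k -> n * n.+1 = 2 * k * s ->
  (forall i, i < e -> nth 0 P i = 2) ->
  (forall i, e <= i < e + f -> nth 0 P i = 3) ->
  3 * (s - n) < s + 6 -> n.+1 < s - n + 2 * e + f -> 1 <= s - n -> s <= n + n ->
  ~ equitable n k P.
Proof.
move=> k0 hef hs H2 H3 hlo hcnt hlo1 hsn [g [Hc Hs]].
have HS : forall i : 'I_k, \sum_(x | g x == i) (x:nat).+1 = s.
  move=> i.
  have tot : \sum_(x < n) (x:nat).+1 = \sum_(j : 'I_k) \sum_(x | g x == j) (x:nat).+1.
    by rewrite (partition_big g xpredT).
  have E2 : \sum_(j : 'I_k) \sum_(x | g x == j) (x:nat).+1 = k * \sum_(x | g x == i) (x:nat).+1.
    rewrite (eq_bigr (fun j : 'I_k => \sum_(x | g x == i) (x:nat).+1)); last by move=> j _; exact: (Hs j i).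
    by rewrite sum_nat_const card_ord.
  move: (sum_vals n); rewrite tot E2 hs => E.
  have : (2 * k) * \sum_(x | g x == i) (x:nat).+1 = (2 * k) * s by rewrite -E; lia.
  by move/eqP; rewrite eqn_pmul2l ?muln_gt0 // => /eqP.
have CA : forall i : 'I_k, i < e -> forall x, g x == i -> s - n <= (x:nat).+1.
  move=> i hi x hx.
  have cB : #|[set y | g y == i]| = 2 by rewrite Hc H2.
  have xB : x \in [set y | g y == i] by rewrite inE.
  have : #|[set y | g y == i] :\ x| == 1 by move: cB; rewrite (cardsD1 x) xB; lia.
  move/cards1P => [y Hy].
  have sumB : \sum_(z in [set y | g y == i]) (z:nat).+1 = s.
    by rewrite -(HS i); apply: eq_bigl => z; rewrite inE.
  rewrite (big_setD1 x xB) Hy big_set1 /= in sumB.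
  have := ltn_ord y. lia.
have CB : forall i : 'I_k, e <= i < e + f -> exists x, g x == i /\ s - n <= (x:nat).+1.
  move=> i hi.
  case: (pickP [pred x | (g x == i) && (s - n <= (x:nat).+1)]) => [x /andP[h1 h2]| hnone].
    by exists x.
  exfalso.
  have cB : #|[set y | g y == i]| = 3 by rewrite Hc H3.
  have : 0 < #|[set y | g y == i]| by rewrite cB.
  case/card_gt0P => x xB.
  have : #|[set y | g y == i] :\ x| == 2 by move: cB; rewrite (cardsD1 x) xB; lia.
  case/cards2P => [y [z [yz Hyz]]].
  have yB : y \in [set y | g y == i] :\ x by rewrite Hyz !inE eqxx.
  have zB : z \in [set y | g y == i] :\ x by rewrite Hyz !inE eqxx orbT.
  have sumB : \sum_(z in [set y | g y == i]) (z:nat).+1 = s.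
    by rewrite -(HS i); apply: eq_bigl => w; rewrite inE.
  have ynz : y \notin [set z] by rewrite inE.
  rewrite (big_setD1 x xB) Hyz (big_setU1 _ ynz) big_set1 /= in sumB.
  move: yB zB; rewrite !inE => /andP[yx gy] /andP[zx gz].
  move: xB; rewrite inE => gx.
  have := hnone x; have := hnone y; have := hnone z; rewrite /= gx gy gz /= => hz hy hx.
  have yz' : (y:nat) != z by [].
  have yx' : (y:nat) != x by [].
  have zx' : (z:nat) != x by [].
  move: hx hy hz yz' yx' zx'; lia.
set W := [set x : 'I_n | s - n <= (x:nat).+1].
have cW : #|W| = n - (s-n).-1.
  rewrite -sum1_card big_mkcond /= -(sum_ind (s-n) n).
  by apply: eq_bigr => x _; rewrite inE.
have lb : \sum_(j < e+f) (if j < e then 2 else 1) <= #|W|.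
  rewrite (big_ord_widen _ (fun j => if j < e then 2 else 1) hef) big_mkcond /=.
  rewrite -sum1_card (partition_big g xpredT) //=.
  apply: leq_sum => j _.
  case: ifP => hj; last done.
  case: ifP => hje.
    rewrite (eq_bigl (fun x => g x == j)); last first.
      move=> x /=; case E: (g x == j); rewrite ?andbT ?andbF //.
      by rewrite inE (CA j hje x E).
    rewrite -(H2 j hje) -Hc -sum1_card; apply/eq_leq/eq_bigl => x; rewrite inE.
    done.
  have hj' : e <= j < e + f by lia.
  have [x [gx xW]] := CB j hj'.
  rewrite (bigD1 x) //=; last by rewrite inE xW.
rewrite sum_2_1 cW in lb; lia.
Qed.

Lemma good (n k e f b L s : nat) :
  k = e + f + b + 1 -> n = 2*e + 3*f + 6*b + L -> 6 <= L -> 1 <= e ->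
  n * n.+1 = 2 * k * s ->
  3 * (s - n) < s + 6 -> n.+1 < s - n + 2 * e + f -> 1 <= s - n -> s <= n + n ->
  (forall j, 1 <= j <= e -> 2 * j * s <= (2*j) * (2*n+1 - 2*j)) ->
  (forall i, 1 <= i <= f -> 2 * (e+i) * s <= (2*e+3*i) * (2*n+1 - (2*e+3*i))) ->
  (forall i, 1 <= i <= b ->
     2 * (e+f+i) * s <= (2*e+3*f+6*i) * (2*n+1 - (2*e+3*f+6*i))) ->
  good_completion n k e f.
Proof.
move=> hk hn hL he hs h3 hc hl1 hsn C1 C2 C3.
set P := nseq e 2 ++ nseq f 3 ++ nseq b 6 ++ [:: L].
have hsnk : snk n k = s by rewrite /snk hs mulKn // hk; lia.
exists P; split; [|split; [|split]].
- rewrite /in_AP hs dvdn_mulr // /asc_partition.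
  rewrite !size_cat !size_nseq /= !all_cat !all_nseq /= !sumn_cat !sumn_nseq /=.
  apply/and4P; split.
  + by apply/eqP; lia.
  + by rewrite !orbT /=; apply/eqP; lia. 
  + apply: sorted_nseq; last by rewrite !all_cat !all_nseq /= !orbT /=; apply/eqP; lia.
    apply: sorted_nseq; last by rewrite !all_cat !all_nseq /= !orbT /=; apply/eqP; lia.
    apply: sorted_nseq => //=; rewrite andbT; apply/eqP; lia.
  + apply/eqP; lia.
- split => i hi; rewrite /P nth_cat size_nseq nth_nseq.
    by rewrite hi.
  have -> : (i < e) = false by lia.
  rewrite nth_cat size_nseq nth_nseq.
  have -> : (i - e < f) = true by lia.
  done.
- apply: (@noneq n k e f s) => //; try lia.
    move=> i hi; rewrite /P nth_cat size_nseq nth_nseq hi //.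
  move=> i hi; rewrite /P nth_cat size_nseq nth_nseq.
  have -> : (i < e) = false by lia.
  rewrite nth_cat size_nseq nth_nseq.
  have -> : (i - e < f) = true by lia.
  done.
have key : forall j, 1 <= j < k ->
   2 * j * s <= sumn (take j P) * (2 * n + 1 - sumn (take j P)) /\ sumn (take j P) <= n.
  move=> j hj; rewrite /P !sumn_take_nseq.
  case: ifP => h1.
    by split; [apply: C1; lia | lia].
  case: ifP => h2.
    have := C2 (j - e); have -> : e + (j - e) = j by lia.
    by move=> H; split; [apply: H; lia | lia].
  case: ifP => h4.
    have := C3 (j - e - f); have -> : e + f + (j - e - f) = j by lia.
    by rewrite !addnA => H; split; [apply: H; lia | lia].
  lia.
have sj : forall j, 1 <= j < k -> (0 <= slack_j n k P j)%R.
  move=> j hj; rewrite /slack_j subr_ge0 lez_nat hsnk.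
  have [hk1 hk2] := key j hj.
  by rewrite -(@leq_pmul2l 2) // (sum_top _ _ hk2) mulnA.
rewrite /slack big_seq.
apply: (big_ind (fun x : int => 0 <= x)%R).
- apply: sj; lia.
- by move=> x y hx hy; rewrite le_min hx hy.
- by move=> j; rewrite mem_index_iota => hj; apply: sj.
Qed.

Lemma caseA (u : nat) : 3 <= u ->
  good_completion (12 * u + 3) (4 * u + 1) (3 * u) 2.
Proof.
move=> hu.
apply: (@good _ _ _ _ (u - 2) 9 (18 * u + 6)); try lia.
  move=> j hj; apply: leq_mul => //; lia.
move=> i hi.
have [->|->] : i = 1 \/ i = 2 by lia.
  nia.
nia.
move=> i hi.
nia.
Qed.

Lemma caseB (u : nat) : 3 <= u ->
  good_completion (12 * u + 9) (4 * u + 3) (3 * u + 1) 3.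
Proof.
move=> hu.
apply: (@good _ _ _ _ (u - 2) 10 (18 * u + 15)); try lia.
  move=> j hj; apply: leq_mul => //; lia.
move=> i hi.
have [->|[->|->]] : i = 1 \/ i = 2 \/ i = 3 by lia.
    nia.
  nia.
nia.
move=> i hi.
nia.
Qed.

Lemma caseC (u : nat) : 5 <= u ->
  good_completion (12 * u + 2) (4 * u + 1) (3 * u) 3.
Proof.
move=> hu.
apply: (@good _ _ _ _ (u - 3) 11 (18 * u + 3)); try lia.
  move=> j hj; apply: leq_mul => //; lia.
move=> i hi.
have [->|[->|->]] : i = 1 \/ i = 2 \/ i = 3 by lia.
    nia.
  nia.
nia.
move=> i hi.
nia.
Qed.

Lemma caseD (u : nat) : 5 <= u ->
  good_completion (12 * u + 8) (4 * u + 3) (3 * u + 2) 2.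
Proof.
move=> hu.
apply: (@good _ _ _ _ (u - 2) 10 (18 * u + 12)); try lia.
  move=> j hj; apply: leq_mul => //; lia.
move=> i hi.
have [->|->] : i = 1 \/ i = 2 by lia.
  nia.
nia.
move=> i hi.
nia.
Qed.

Lemma half_ex (t : nat) : exists u, t = 2 * u + odd t.
Proof.
exists t./2; by rewrite -{1}(odd_double_half t) -mul2n addnC.
Qed.

Theorem mainTheorem3 :
  (forall t : nat, ~~ odd t -> 6 <= t ->
     good_completion (6 * t + 3) (2 * t + 1) ((3 * t) %/ 2) 2) /\
  (forall t : nat, odd t -> 7 <= t ->
     good_completion (6 * t + 3) (2 * t + 1) ((3 * t - 1) %/ 2) 3) /\
  (forall t : nat, ~~ odd t -> 10 <= t ->
     good_completion (6 * t + 2) (2 * t + 1) ((3 * t) %/ 2) 3) /\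
  (forall t : nat, odd t -> 11 <= t ->
     good_completion (6 * t + 2) (2 * t + 1) ((3 * t + 1) %/ 2) 2).
Proof.
split; [|split; [|split]] => t ht hlo; have [u hu] := half_ex t.
- rewrite (negbTE ht) addn0 in hu; subst t.
  have -> : 6 * (2 * u) + 3 = 12 * u + 3 by lia.
  have -> : 2 * (2 * u) + 1 = 4 * u + 1 by lia.
  have -> : (3 * (2 * u)) %/ 2 = 3 * u by lia.
  apply: caseA; lia.
- rewrite ht in hu; subst t.
  have -> : 6 * (2 * u + 1) + 3 = 12 * u + 9 by lia.
  have -> : 2 * (2 * u + 1) + 1 = 4 * u + 3 by lia.
  have -> : (3 * (2 * u + 1) - 1) %/ 2 = 3 * u + 1 by lia.
  apply: caseB; lia.
- rewrite (negbTE ht) addn0 in hu; subst t.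
  have -> : 6 * (2 * u) + 2 = 12 * u + 2 by lia.
  have -> : 2 * (2 * u) + 1 = 4 * u + 1 by lia.
  have -> : (3 * (2 * u)) %/ 2 = 3 * u by lia.
  apply: caseC; lia.
- rewrite ht in hu; subst t.
  have -> : 6 * (2 * u + 1) + 2 = 12 * u + 8 by lia.
  have -> : 2 * (2 * u + 1) + 1 = 4 * u + 3 by lia.
  have -> : (3 * (2 * u + 1) + 1) %/ 2 = 3 * u + 2 by lia.
  apply: caseD; lia.
Qed.
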